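(* Let $P,Q$ be finite posets, $R$ an indecomposable commutative unital ring, and $\Phi:I^3(P,R)\to I^3(Q,R)$ an $R$-linear algebra isomorphism. Then $\Phi(J^3_1(P,R))=J^3_1(Q,R)$, and there is a bijection $\varphi:P\to Q$ such that $\Phi(e_x)-e_{\varphi(x)}\in J^3_1(Q,R)$ for all $x\in P$ (equivalently, the induced isomorphism $I^3(P,R)/J^3_1(P,R)\to I^3(Q,R)/J^3_1(Q,R)$ maps $e_x+J^3_1(P,R)$ to $e_{\varphi(x)}+J^3_1(Q,R)$).
   Context: A commutative ring is indecomposable if its only idempotents are $0$ and $1$. For a finite poset $P$, $P^3_\le=\{(x,y,z)\in P^3: x\le y\le z\}$, and $I^3(P,R)$ is the $R$-module of functions $f:P^3_\le\to R$ with multiplication $(fg)(x_1,x_2,x_3)=\sum f(x_1,y_1,y_2)g(y_1,y_2,x_3)$ over all $x_1\le y_1\le x_2\le y_2\le x_3$. For $x\le y\le z$, $e_{xyz}$ is the function equal to $1$ at $(x,y,z)$ and $0$ elsewhere, and $e_x:=e_{xxx}$. $J^3_1(P,R)=\{f\in I^3(P,R): f(x,x,x)=0 \text{ for all } x\in P\}$, an ideal. *)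

(* Defs.v *)
From HB Require Import structures.
From mathcomp Require Import all_boot all_order all_algebra.
Set Implicit Arguments. Unset Strict Implicit. Unset Printing Implicit Defensive.
Import Order.TTheory GRing.Theory.
Local Open Scope ring_scope.
Local Open Scope order_scope.

Section I3.
Variables (d : Order.disp_t) (P : finPOrderType d) (R : comNzRingType).

Definition is_chain3 (t : P * P * P) : bool := (t.1.1 <= t.1.2) && (t.1.2 <= t.2).
Definition chain3 := {t : P * P * P | is_chain3 t}.

Definition I3 := {ffun chain3 -> R^o}.
HB.instance Definition _ := GRing.Lmodule.on I3.

Definition at3 (f : I3) (x y z : P) : R :=
  if @insub _ is_chain3 chain3 (x, y, z) is Some t then f t else 0%R.

Definition mul3 (f g : I3) : I3 :=
  [ffun t : chain3 =>
     let: (x1, x2, x3) := val t in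
     \sum_(y1 : P) \sum_(y2 : P)
        (if [&& (x1 <= y1)%O, (y1 <= x2)%O, (x2 <= y2)%O & (y2 <= x3)%O]
         then (at3 f x1 y1 y2 * at3 g y1 y2 x3)%R else 0%R)].

Definition e3 (x y z : P) : I3 := [ffun t : chain3 => ((val t == (x, y, z))%:R)%R].
Definition e1 (x : P) : I3 := e3 x x x.

Definition J31 (f : I3) : Prop := forall x : P, at3 f x x x = 0%R.
End I3.

Definition indecomposable (R : comNzRingType) : Prop :=
  forall e : R, (e * e = e)%R -> e = 0%R \/ e = 1%R.

(* Main.v *)
Require Import Defs.
From HB Require Import structures.
From mathcomp Require Import all_boot all_order all_algebra.
Import GRing.Theory.
Set Implicit Arguments. Unset Strict Implicit. Unset Printing Implicit Defensive.
Import Order.POrderTheory.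
Local Open Scope ring_scope.
Local Open Scope order_scope.

Section Basic.
Variables (d : Order.disp_t) (P : finPOrderType d) (R : comNzRingType).
Implicit Types (f g h : I3 P R) (x y z a b c : P).

Lemma tripleE (t : P * P * P) : (t.1.1, t.1.2, t.2) = t.
Proof. by case: t => [[]]. Qed.

Lemma at3E f (t : chain3 P) : at3 f (val t).1.1 (val t).1.2 (val t).2 = f t.
Proof.
rewrite /at3 tripleE; case: insubP => [u _ hu|]; last by rewrite (valP t).
by congr (f _); apply: val_inj.
Qed.

Lemma at3_nc f x y z : ~~ is_chain3 (x, y, z) -> at3 f x y z = 0%R.
Proof. by move=> h; rewrite /at3 insubF //; apply: negbTE. Qed.

Lemma eq3 f g : (forall x y z, at3 f x y z = at3 g x y z) -> f = g.
Proof. by move=> h; apply/ffunP => t; rewrite -!at3E. Qed.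

Lemma at3L (k : R) f g x y z : at3 (k *: f + g) x y z = (k * at3 f x y z + at3 g x y z)%R.
Proof. by rewrite /at3; case: insub => [t|]; rewrite ?ffunE // mulr0 addr0. Qed.

Lemma at3_0 x y z : at3 (0 : I3 P R) x y z = 0%R.
Proof. by rewrite /at3; case: insub => [t|]; rewrite ?ffunE. Qed.

Lemma at3D f g x y z : at3 (f + g) x y z = (at3 f x y z + at3 g x y z)%R.
Proof. by have := at3L 1 f g x y z; rewrite scale1r mul1r. Qed.

Lemma at3Z (k : R) f x y z : at3 (k *: f) x y z = (k * at3 f x y z)%R.
Proof. by have := at3L k f 0 x y z; rewrite addr0 at3_0 addr0. Qed.

Lemma at3B f g x y z : at3 (f - g) x y z = (at3 f x y z - at3 g x y z)%R.
Proof.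
have h := at3L (-1) g f x y z; rewrite scaleN1r mulN1r in h.
by rewrite addrC h addrC.
Qed.

Lemma at3_sum (I : finType) (F : I -> I3 P R) x y z :
  at3 (\sum_i F i) x y z = (\sum_i at3 (F i) x y z)%R.
Proof.
apply: (big_morph (fun f => at3 f x y z)); [move=> f g; exact: at3D | exact: at3_0].
Qed.

Lemma at3_mul f g x1 x2 x3 : at3 (mul3 f g) x1 x2 x3 =
  \sum_(y1 : P) \sum_(y2 : P)
        (if [&& (x1 <= y1)%O, (y1 <= x2)%O, (x2 <= y2)%O & (y2 <= x3)%O]
         then (at3 f x1 y1 y2 * at3 g y1 y2 x3)%R else 0%R).
Proof.
rewrite {1}/at3; case: insubP => [u _ eu|hn]; first by rewrite ffunE eu.
rewrite big1 // => y1 _; rewrite big1 // => y2 _.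
case: ifP => // /and4P [h1 h2 h3 h4]; move: hn.
by rewrite /is_chain3 /= (le_trans h1 h2) (le_trans h3 h4).
Qed.

Lemma sum2_1 (a b : P) (K : R) (F : P -> P -> R) :
  (forall y1 y2, F y1 y2 = if (y1 == a) && (y2 == b) then K else 0%R) ->
  (\sum_y1 \sum_y2 F y1 y2)%R = K.
Proof.
move=> hF; rewrite (bigD1 a) //= [X in (_ + X)%R]big1; last first.
  by move=> y1 ny1; rewrite big1 // => y2 _; rewrite hF (negbTE ny1).
rewrite addr0 (bigD1 b) //= [X in (_ + X)%R]big1; last first.
  by move=> y2 ny2; rewrite hF (negbTE ny2) andbF.
by rewrite addr0 hF !eqxx.
Qed.

Lemma at3_diag f g x : at3 (mul3 f g) x x x = (at3 f x x x * at3 g x x x)%R.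
Proof.
rewrite at3_mul. apply: (sum2_1 (a:=x) (b:=x)) => y1 y2.
case: ifP => [/and4P [h1 h2 h3 h4]|hc].
  have e1 : y1 = x by apply/eqP; rewrite eq_le h2 h1.
  have e2 : y2 = x by apply/eqP; rewrite eq_le h4 h3.
  by subst; rewrite !eqxx.
by case: ifP => // /andP [/eqP e1 /eqP e2]; subst; rewrite lexx in hc.
Qed.


Lemma at3e3 a b c x y z : (a <= b)%O -> (b <= c)%O ->
  at3 (e3 R a b c) x y z = ((x == a) && (y == b) && (z == c))%:R%R.
Proof.
move=> hab hbc; rewrite /at3; case: insubP => [u _ eu|hn].
  by rewrite ffunE eu !xpair_eqE.
have [ea|ne] := eqVneq x a; last by rewrite /= mulr0n.
have [eb|ne] := eqVneq y b; last by rewrite andbF /= mulr0n.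
have [ec|ne] := eqVneq z c; last by rewrite andbF /= mulr0n.
by subst; rewrite /is_chain3 /= hab hbc in hn.
Qed.

Lemma LM a b c g x1 x2 x3 : (a <= b)%O -> (b <= c)%O ->
  at3 (mul3 (e3 R a b c) g) x1 x2 x3 =
  if [&& x1 == a, (b <= x2)%O & (x2 <= c)%O] then at3 g b c x3 else 0%R.
Proof.
move=> hab hbc; rewrite at3_mul; apply: (sum2_1 (a:=b) (b:=c)) => y1 y2.
rewrite at3e3 //.
have [->|ne1] := eqVneq y1 b; last by rewrite /= ?andbF /= mulr0n mul0r; case: ifP.
have [->|ne2] := eqVneq y2 c; last by rewrite /= ?andbF /= mulr0n mul0r; case: ifP.
rewrite ?eqxx ?andbT /=.
have [->|ne] := eqVneq x1 a; last by rewrite /= mulr0n mul0r; case: ifP.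
rewrite hab /= mulr1n mul1r.
case: (b <= x2)%O => //=; case: (x2 <= c)%O => //=.
case hc: (c <= x3)%O => //.
by rewrite at3_nc // /is_chain3 /= hbc hc.
Qed.

Lemma RM a b c h x1 x2 x3 : (a <= b)%O -> (b <= c)%O ->
  at3 (mul3 h (e3 R a b c)) x1 x2 x3 =
  if [&& x3 == c, (a <= x2)%O & (x2 <= b)%O] then at3 h x1 a b else 0%R.
Proof.
move=> hab hbc; rewrite at3_mul; apply: (sum2_1 (a:=a) (b:=b)) => y1 y2.
rewrite at3e3 //.
have [->|ne1] := eqVneq y1 a; last by rewrite /= ?andbF /= mulr0n mulr0; case: ifP.
have [->|ne2] := eqVneq y2 b; last by rewrite /= ?andbF /= mulr0n mulr0; case: ifP.
rewrite ?eqxx /=.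
have [->|ne] := eqVneq x3 c; last by rewrite /= ?andbF ?mulr0n ?mulr0; case: ifP.
rewrite hbc ?eqxx /= mulr1n mulr1 !andbT.
case: (a <= x2)%O; case: (x2 <= b)%O; rewrite /= ?andbF //.
by case hc: (x1 <= a)%O; rewrite // at3_nc // /is_chain3 /= hc.
Qed.

Lemma e1e1 x : mul3 (e1 R x) (e1 R x) = e1 R x.
Proof.
apply: eq3 => x1 x2 x3; rewrite /e1 LM ?lexx // !at3e3 ?lexx // !eqxx /=.
rewrite -eq_le [x == x2]eq_sym.
by case: (x1 == x); case: (x2 == x).
Qed.

Lemma e1e1' x y : x != y -> mul3 (e1 R x) (e1 R y) = 0.
Proof.
move=> hxy; apply: eq3 => x1 x2 x3; rewrite /e1 LM ?lexx // !at3e3 ?lexx // at3_0.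
by rewrite (negbTE hxy) /= mulr0n; case: ifP.
Qed.

Lemma e3_dec a b c : (a <= b)%O -> (b <= c)%O ->
  e3 R a b c = mul3 (e3 R a b b) (mul3 (e1 R b) (e3 R b b c)).
Proof.
move=> hab hbc; apply: eq3 => x1 x2 x3.
rewrite at3e3 // LM ?lexx // /e1 LM ?lexx // at3e3 ?lexx // !eqxx /=.
rewrite -eq_le [b == x2]eq_sym.
by case: (x1 == a); case: (x2 == b).
Qed.

Lemma sandwich F x :
  mul3 (mul3 (e1 R x) F) (e1 R x) = at3 F x x x *: e1 R x.
Proof.
apply: eq3 => x1 x2 x3.
rewrite /e1 RM ?lexx // LM ?lexx // at3Z at3e3 ?lexx // ?lexx /=.

rewrite -eq_le [x == x2]eq_sym.
by case: (x1 == x); case: (x2 == x); case: (x3 == x); rewrite /= ?mulr1n ?mulr0n ?mulr1 ?mulr0.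
Qed.

Lemma expand f :
  f = \sum_(t : chain3 P) f t *: e3 R (val t).1.1 (val t).1.2 (val t).2.
Proof.
apply/ffunP => s; rewrite sum_ffunE (bigD1 s) //= [X in (_ + X)%R]big1.
  by rewrite !ffunE tripleE eqxx mulr1n addr0 -[RHS]/(f s * 1)%R mulr1.
move=> t nts; rewrite !ffunE tripleE (inj_eq val_inj) eq_sym (negbTE nts).
by rewrite mulr0n; exact: (mulr0 (f t)).
Qed.

End Basic.


Section Iso.
Variables (dP dQ : Order.disp_t) (P : finPOrderType dP) (Q : finPOrderType dQ)
  (R : comNzRingType) (Phi : I3 P R -> I3 Q R).
Hypothesis hR : indecomposable R.
Hypothesis hlin : forall (a : R) (f g : I3 P R), Phi (a *: f + g) = a *: Phi f + Phi g.
Hypothesis hmul : forall f g : I3 P R, Phi (mul3 f g) = mul3 (Phi f) (Phi g).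

Lemma Phi0 : Phi 0 = 0.
Proof. by have := hlin (-1) 0 0; rewrite scaler0 addr0 scaleN1r addNr. Qed.

Lemma PhiD f g : Phi (f + g) = Phi f + Phi g.
Proof. by have := hlin 1 f g; rewrite !scale1r. Qed.

Lemma PhiZ (a : R) f : Phi (a *: f) = a *: Phi f.
Proof. by have := hlin a f 0; rewrite !addr0 Phi0 addr0. Qed.

Lemma Phi_sum (I : finType) (F : I -> I3 P R) :
  Phi (\sum_i F i) = \sum_i Phi (F i).
Proof. apply: big_morph; [exact: PhiD | exact: Phi0]. Qed.

Definition chi (q : Q) f := at3 (Phi f) q q q.

Lemma chiM q f g : chi q (mul3 f g) = (chi q f * chi q g)%R.
Proof. by rewrite /chi hmul at3_diag. Qed.

Lemma chi01 q x : chi q (e1 R x) = 0%R \/ chi q (e1 R x) = 1%R.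
Proof. by apply: hR; rewrite -chiM e1e1. Qed.

Lemma chi_disj q x y : x != y -> (chi q (e1 R x) * chi q (e1 R y) = 0)%R.
Proof. by move=> hxy; rewrite -chiM e1e1' // /chi Phi0 at3_0. Qed.

Lemma cover : bijective Phi -> forall q, exists x, chi q (e1 R x) = 1%R.
Proof.
case=> Pinv c1 c2 q.
have h1 : chi q (Pinv (e1 R q)) = 1%R.
  by rewrite /chi c2 /e1 at3e3 ?lexx // !eqxx mulr1n.
case: (pickP (fun x => chi q (e1 R x) == 1%R)) => [x /eqP hx|hno]; first by exists x.
move: h1; rewrite [Pinv _]expand /chi Phi_sum at3_sum big1.
  by move/esym/eqP; rewrite oner_eq0.
move=> t _; rewrite PhiZ at3Z.
have /andP [hab hbc] := valP t.
rewrite (e3_dec R hab hbc) -/(chi q _) !chiM.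
have -> : chi q (e1 R (val t).1.2) = 0%R.
  by case: (chi01 q (val t).1.2) => // h; move: (hno (val t).1.2); rewrite h eqxx.
by rewrite mul0r !mulr0.
Qed.

Lemma transfer (F : I3 P R) q x : Phi F = e1 R q -> chi q (e1 R x) = 1%R ->
  at3 F x x x = 1%R.
Proof.
move=> hF hx; have := congr1 Phi (sandwich F x).
rewrite !hmul hF PhiZ => /(congr1 (fun g => at3 g q q q)).
rewrite !at3_diag at3Z -/(chi q _) hx /e1 at3e3 ?lexx // !eqxx mulr1n !mulr1.
by move=> <-.
Qed.

Lemma Jfwd : bijective Phi -> forall f, J31 f -> J31 (Phi f).
Proof.
move=> bij f hf q; have [x hx] := cover bij q.
have := congr1 Phi (sandwich f x); rewrite hf scale0r Phi0 !hmul.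
move/(congr1 (fun g => at3 g q q q)); rewrite !at3_diag at3_0 -/(chi q _) hx.
by rewrite mul1r mulr1.
Qed.

End Iso.

Theorem corollary3p2 (dP dQ : Order.disp_t) (P : finPOrderType dP)
  (Q : finPOrderType dQ) (R : comNzRingType) (Phi : I3 P R -> I3 Q R) :
  indecomposable R ->
  bijective Phi ->
  (forall (a : R) (f g : I3 P R), Phi (a *: f + g) = a *: Phi f + Phi g) ->
  (forall f g : I3 P R, Phi (mul3 f g) = mul3 (Phi f) (Phi g)) ->
  (forall g : I3 Q R, (exists2 f : I3 P R, J31 f & Phi f = g) <-> J31 g) /\
  (exists varphi : P -> Q, bijective varphi /\
     forall x : P, J31 (Phi (e1 R x) - e1 R (varphi x))).
Proof.
move=> hR bij hlin hmul.
have bij' := bij; case: bij' => Pinv c1 c2.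
have linI : forall (a : R) (f g : I3 Q R), Pinv (a *: f + g) = a *: Pinv f + Pinv g.
  by move=> a f g; apply: (can_inj c1); rewrite c2 hlin !c2.
have mulI : forall f g : I3 Q R, Pinv (mul3 f g) = mul3 (Pinv f) (Pinv g).
  by move=> f g; apply: (can_inj c1); rewrite c2 hmul !c2.
have bijI : bijective Pinv by exists Phi.
split.
  move=> g; split; first by case=> f hf <-; exact: (Jfwd hR hlin hmul bij).
  by move=> hg; exists (Pinv g); [exact: (Jfwd hR linI mulI bijI) | exact: c2].
have ST : forall x q, chi Phi q (e1 R x) = 1%R -> chi Pinv x (e1 R q) = 1%R.
  by move=> x q h; exact: (transfer hlin hmul (c2 (e1 R q)) h).
have TS : forall x q, chi Pinv x (e1 R q) = 1%R -> chi Phi q (e1 R x) = 1%R.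
  by move=> x q h; exact: (transfer linI mulI (c1 (e1 R x)) h).
have covI : forall x, exists q, chi Pinv x (e1 R q) == 1%R.
  by move=> x; have [q hq] := cover hR linI mulI bijI x; exists q; apply/eqP.
have cov : forall q, exists x, chi Phi q (e1 R x) == 1%R.
  by move=> q; have [x hx] := cover hR hlin hmul bij q; exists x; apply/eqP.
pose varphi x := xchoose (covI x).
pose psi q := xchoose (cov q).
have hvarphi x : chi Pinv x (e1 R (varphi x)) = 1%R := eqP (xchooseP (covI x)).
have hpsi q : chi Phi q (e1 R (psi q)) = 1%R := eqP (xchooseP (cov q)).
have uniqT : forall x q, chi Pinv x (e1 R q) = 1%R -> q = varphi x.
  move=> x q h; apply/eqP; apply/negPn/negP => hne.
  have := chi_disj linI mulI x hne; rewrite h hvarphi mul1r => /eqP.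
  by rewrite oner_eq0.
have uniqS : forall x q, chi Phi q (e1 R x) = 1%R -> x = psi q.
  move=> x q h; apply/eqP; apply/negPn/negP => hne.
  have := chi_disj hlin hmul q hne; rewrite h hpsi mul1r => /eqP.
  by rewrite oner_eq0.
exists varphi; split.
  exists psi.
    by move=> x; apply/esym/uniqS/TS/hvarphi.
  by move=> q; apply/esym/uniqT/ST/hpsi.
move=> x q; rewrite at3B /e1 at3e3 ?lexx // -/(e1 R x) -/(chi Phi q _).
have [eqq|ne] := eqVneq q (varphi x).
  by rewrite /= mulr1n (TS x q) ?subrr // eqq; exact: hvarphi.
rewrite /= mulr0n subr0.
case: (chi01 hR hmul q x) => // h.
by case/eqP: ne; apply: uniqT; apply: ST.
Qed.
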